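(* Let $n\ge1$, let $\theta_1,\dots,\theta_n,\theta\in\mathbb R$, $\boldsymbol\theta=(\theta_1,\dots,\theta_n)$, and define $|W_n(\boldsymbol\theta)\rangle=\frac1{\sqrt n}\sum_{j=1}^ne^{i\theta_j}X_j|0\rangle^{\otimes n}$, $|W_n(\theta)\rangle=|W_n((\theta,2\theta,\dots,n\theta))\rangle$, and $|W_n\rangle=|W_n(0)\rangle$. Then $$\|\Xi_{W_n(\boldsymbol\theta)}\|_4^4=\frac{d}{n^4}\Bigl[6n(n-1)+\Bigl|\sum_{j=1}^ne^{4i\theta_j}\Bigr|^2\Bigr],\qquad M_2(W_n(\boldsymbol\theta))=\log_2\frac{n^4}{6n(n-1)+\bigl|\sum_{j=1}^ne^{4i\theta_j}\bigr|^2};$$ in particular $\|\Xi_{W_n}\|_4^4=\frac{d(7n-6)}{n^3}$, $M_2(W_n)=\log_2\frac{n^3}{7n-6}$, and $$\|\Xi_{W_n(\theta)}\|_4^4=\frac{d[6n^2-6n+\sin^2(2n\theta)/\sin^2(2\theta)]}{n^4},\qquad M_2(W_n(\theta))=\log_2\frac{n^4}{6n^2-6n+\sin^2(2n\theta)/\sin^2(2\theta)}$$ (with $\sin^2(2n\theta)/\sin^2(2\theta)$ interpreted as $n^2$ when $\sin(2\theta)=0$).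
   Context: $d=2^n$; $X_j$ denotes the Pauli $X$ acting on the $j$th qubit. $\overline{\mathcal P}_n=\{I,X,Y,Z\}^{\otimes n}$; for a pure state $|\psi\rangle$, $\Xi_\psi(P)=\langle\psi|P|\psi\rangle$ for $P\in\overline{\mathcal P}_n$, $\|\Xi_\psi\|_4^4=\sum_P\Xi_\psi(P)^4$, and the stabilizer 2-Rényi entropy is $M_2(\psi)=-\log_2(\|\Xi_\psi\|_4^4/d)$. *)

(* Defs.v *)
From HB Require Import structures.
From mathcomp Require Import all_boot all_order all_algebra.
From mathcomp Require Import all_classical all_reals all_analysis.
From mathcomp Require Import complex.
Set Implicit Arguments. Unset Strict Implicit. Unset Printing Implicit Defensive.
Import Order.TTheory GRing.Theory Num.Theory.
Local Open Scope ring_scope.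
Local Open Scope complex_scope.

Section Defs.
Variable R : realType.
Variable n : nat.

(* computational basis of n qubits: bit strings b : 'I_n -> bool
   (false = |0>, true = |1>);  d = 2^n basis states *)
Definition basis := {ffun 'I_n -> bool}.
(* labels of single-qubit Paulis: 0 = I, 1 = X, 2 = Y, 3 = Z *)
Definition pauli := {ffun 'I_n -> 'I_4}.

Definition expi (t : R) : R[i] := Complex (cos t) (sin t).

(* single-qubit Pauli matrices, entry (row a, column b) *)
Definition sigma (k : 'I_4) (a b : bool) : R[i] :=
  match val k with
  | 0%N => if a == b then 1 else 0
  | 1%N => if a != b then 1 else 0
  | 2%N => if a == b then 0
           else if a then Complex 0 1 else Complex 0 (-1)
  | _ => if a == b then (if a then -1 else 1) else 0
  end.

Definition Pmat (P : pauli) (b c : basis) : R[i] :=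
  \prod_(k < n) sigma (P k) (b k) (c k).

Definition Papply (P : pauli) (v : basis -> R[i]) (b : basis) : R[i] :=
  \sum_(c : basis) Pmat P b c * v c.

Definition ket0 (c : basis) : R[i] := if c == [ffun=> false] then 1 else 0.

Definition Xat (j : 'I_n) : pauli :=
  [ffun k => if k == j then (@Ordinal 4 1 isT) else (@Ordinal 4 0 isT)].

Definition Wstate (th : 'I_n -> R) (b : basis) : R[i] :=
  ((Num.sqrt (n%:R : R))^-1)%:C *
  \sum_(j < n) expi (th j) * Papply (Xat j) ket0 b.

(* Xi_psi(P) = <psi|P|psi>  (real for Hermitian P; we take the real part) *)
Definition Xi (psi : basis -> R[i]) (P : pauli) : R :=
  complex.Re (\sum_(b : basis) (psi b)^* * Papply P psi b).

Definition norm44 (psi : basis -> R[i]) : R :=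
  \sum_(P : pauli) (Xi psi P) ^+ 4.

Definition log2 (x : R) : R := ln x / ln 2.

Definition M2 (psi : basis -> R[i]) : R :=
  - log2 (norm44 psi / (2 ^+ n)).

Definition sinratio (t : R) : R :=
  if sin (2 * t) == 0 then (n%:R) ^+ 2
  else sin (2 * n%:R * t) ^+ 2 / sin (2 * t) ^+ 2.

End Defs.

(* Main.v *)
Require Import Defs.
From HB Require Import structures.
From mathcomp Require Import all_boot all_order all_algebra.
From mathcomp Require Import all_classical all_reals all_analysis.
From mathcomp Require Import complex.
From mathcomp Require Import ring lra.
Import Order.TTheory GRing.Theory Num.Theory.
Local Open Scope ring_scope.
Local Open Scope complex_scope.



Section S1.
Variable R : realType.
Variable n : nat.
Local Notation C := R[i].
Local Notation cj := (@Num.conj _).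

Definition ev1 (j : 'I_n) : Defs.basis n := [ffun k => k == j].
Definition M (P : pauli n) (j l : 'I_n) : C := Pmat R P (ev1 j) (ev1 l).
Definition flip (p : 'I_4) : bool := (val p == 1%N) || (val p == 2%N).

Lemma sigma_eq0 p a b : flip p != (a != b) -> sigma R p a b = 0.
Proof. by case: p => [[|[|[|[|m]]]] Hp] //=; case: a; case: b. Qed.

Lemma sigma_conj p a b : (sigma R p a b)^* = sigma R p b a.
Proof.
case: p => [[|[|[|[|m]]]] Hp] //=; case: a; case: b; rewrite /sigma /=;
  rewrite ?conjc0 ?conjc1 ?rmorphN ?conjc1 //= /conjc /= ?opprK ?oppr0.
all: apply/eqP; rewrite eq_complex /= ?oppr0 ?opprK ?eqxx //.
Qed.

Lemma Pmat_conj (P : pauli n) (b c : Defs.basis n) : (Pmat R P b c)^* = Pmat R P c b.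
Proof. by rewrite /Pmat rmorph_prod; apply: eq_bigr => k _; exact: sigma_conj. Qed.

Lemma papplyX j b : Papply (Xat j) (@ket0 R n) b = (b == ev1 j)%:R.
Proof.
rewrite /Papply (bigD1 [ffun=> false]) //= big1 => [|c /negPf hc]; last first.
  by rewrite /ket0 hc mulr0.
rewrite /ket0 eqxx mulr1 addr0 /Pmat.
case: eqP => [->|hb].
  by apply: big1 => k _; rewrite /Xat /ev1 !ffunE; have [e|nk] := eqVneq k j.

case/boolP: [exists k, b k != ev1 j k] => [/existsP [k hk]|/existsPn h]; last first.
  by case: hb; apply/ffunP => k; apply/eqP; move: (h k); rewrite negbK.
rewrite (bigD1 k) //= sigma_eq0 ?mul0r //.
move: hk; rewrite /Xat /ev1 !ffunE; case: (k == j); case: (b k) => //.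
Qed.

Lemma sandwich (a : 'I_n -> C) (P : pauli n) :
  \sum_(b : Defs.basis n) (\sum_j a j * (b == ev1 j)%:R)^* *
     Papply P (fun c => \sum_l a l * (c == ev1 l)%:R) b
  = \sum_j \sum_l (a j)^* * a l * M P j l.
Proof.
have hP b : Papply P (fun c => \sum_l a l * (c == ev1 l)%:R) b
    = \sum_l a l * Pmat R P b (ev1 l).
  rewrite /Papply; under eq_bigr do rewrite mulr_sumr.
  rewrite exchange_big /=; apply: eq_bigr => l _.
  rewrite (bigD1 (ev1 l)) //= eqxx mulr1 big1 ?addr0 => [|c /negPf ->].
    by rewrite mulrC.
  by rewrite !mulr0.
under eq_bigr do rewrite hP rmorph_sum mulr_suml.
rewrite exchange_big /=; apply: eq_bigr => j _.
have hS (X : Defs.basis n -> C) :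
    \sum_(b : Defs.basis n) ((a j * (b == ev1 j)%:R)^* * X b) = (a j)^* * X (ev1 j).
  rewrite (bigD1 (ev1 j)) //= big1 ?addr0 => [|b /negPf hb].
    by rewrite eqxx rmorphM rmorph1 mulr1.
  by rewrite hb rmorphM rmorph0 mulr0 mul0r.
rewrite hS mulr_sumr; apply: eq_bigr => l _.
by rewrite /M mulrA.
Qed.

Lemma ReMr (r : R) (z : C) : complex.Re (r%:C * z) = r * complex.Re z.
Proof. by case: z => a b /=; rewrite mul0r subr0. Qed.

Lemma conjRM (r : R) (z : C) : cj (r%:C * z) = r%:C * cj z.
Proof. by case: z => a b; apply/eqP; rewrite eq_complex /= !mul0r !subr0 !addr0 mulrN !eqxx. Qed.

Definition Zc (th : 'I_n -> R) (P : pauli n) : C :=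
  \sum_j \sum_l (expi (th j))^* * expi (th l) * M P j l.

Lemma Xi_W (th : 'I_n -> R) (P : pauli n) : Xi (Wstate th) P = (n%:R)^-1 * complex.Re (Zc th P).
Proof.
set c := (Num.sqrt (n%:R : R))^-1.
have hW : Wstate th = fun b => \sum_j (c%:C * expi (th j)) * (b == ev1 j)%:R.
  apply: funext => b; rewrite /Wstate mulr_sumr; apply: eq_bigr => j _.
  by rewrite papplyX mulrA.
rewrite /Xi hW sandwich.
have -> : \sum_j \sum_l (c%:C * expi (th j))^* * (c%:C * expi (th l)) * M P j l
   = (c * c)%:C * Zc th P.
  rewrite /Zc mulr_sumr; apply: eq_bigr => j _; rewrite mulr_sumr.
  apply: eq_bigr => l _; rewrite conjRM.
  by rewrite rmorphM /=; ring.
rewrite ReMr; congr (_ * _).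
by rewrite /c -invfM -expr2 sqr_sqrtr // ler0n.
Qed.

End S1.
Arguments ev1 {n}.
Arguments M {R n}.
Arguments Zc {R n}.
Arguments flip : clear implicits.



Section S2.
Variable R : realType.
Variable n : nat.
Local Notation C := R[i].
Local Notation cj := (@Num.conj _).
Local Notation M := (@M R n).
Local Notation Zc := (@Zc R n).

Lemma sigma_cj p a b : cj (sigma R p a b) = sigma R p b a.
Proof. exact: sigma_conj. Qed.

Lemma M_cj (P : pauli n) j l : cj (M P j l) = M P l j.
Proof. by rewrite /M /Pmat rmorph_prod; apply: eq_bigr => k _; exact: sigma_cj. Qed.

Lemma expi_unit (t : R) : cj (expi t) * expi t = 1.
Proof.
change ((conjc (expi t)) * expi t = 1).
apply/eqP; rewrite eq_complex /= mulNr opprK -!expr2 cos2Dsin2 eqxx /=.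
by rewrite mulNr mulrC subrr.
Qed.

Lemma Zc_cj th P : cj (Zc th P) = Zc th P.
Proof.
rewrite /Zc rmorph_sum exchange_big /=; apply: eq_bigr => l _.
rewrite rmorph_sum; apply: eq_bigr => j _.
by rewrite !rmorphM /= conjCK M_cj (mulrC (expi _)).
Qed.

Lemma real_of_cj (z : C) : cj z = z -> z = (complex.Re z)%:C.
Proof.
case: z => a b h; have : conjc (a +i* b) = a +i* b := h.
case=> hb; have -> : b = 0 by lra.
by [].
Qed.

Lemma sum_split (f : 'I_n -> 'I_n -> C) :
  \sum_j \sum_l f j l = \sum_j f j j + \sum_(j < n) \sum_(l < n | (j < l)%N) (f j l + f l j).
Proof.
have h j : \sum_l f j l = f j j + \sum_(l < n | (j < l)%N) f j l + \sum_(l < n | (l < j)%N) f j l.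
  rewrite (bigD1 j) //= -addrA; congr (_ + _).
  rewrite [X in _ = X + _]big_mkcond [X in _ = _ + X]big_mkcond -big_split big_mkcond /=.
  apply: eq_bigr => l _.
  case: (ltngtP j l) => hl.
  - have -> : (l != j) by apply/eqP => e; rewrite e ltnn in hl.
    by rewrite addr0.
  - have -> : (l != j) by apply/eqP => e; rewrite e ltnn in hl.
    by rewrite add0r.
  - have e : l = j by apply: val_inj; rewrite /= hl.
    by rewrite e eqxx add0r.
under eq_bigr do rewrite h.
rewrite !big_split /= -addrA; congr (_ + _).
rewrite [X in _ + X = _](eq_bigr (fun j : 'I_n => \sum_(l < n) if (l < j)%N then f j l else 0));
  last by move=> j _; rewrite big_mkcond.
rewrite exchange_big /= -big_split /=; apply: eq_bigr => j _.
rewrite [X in X + _ = _]big_mkcond -big_split /= [RHS]big_mkcond /=.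
by apply: eq_bigr => l _; case: ifP => _; rewrite ?addr0.
Qed.

Lemma M_nz (P : pauli n) j l : M P j l != 0 ->
  forall k : 'I_n, flip (P k) = ((k == j) != (k == l)).
Proof.
move=> h k; apply/eqP; apply: contraNT h => hk.
rewrite /M /Pmat (bigD1 k) //= sigma_eq0 ?mul0r //.
by rewrite /ev1 !ffunE.
Qed.
Arguments M_nz {P j l}.

Definition D (P : pauli n) : C := \sum_j M P j j.
Definition O th (P : pauli n) j l : C :=
  cj (expi (th j)) * expi (th l) * M P j l + cj (expi (th l)) * expi (th j) * M P l j.

Lemma Zc_split th P : Zc th P = D P + \sum_(j < n) \sum_(l < n | (j < l)%N) O th P j l.
Proof.
rewrite /Zc sum_split /D; congr (_ + _).
by apply: eq_bigr => j _; rewrite expi_unit mul1r.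
Qed.

Lemma D_nz P : D P != 0 -> forall k : 'I_n, flip (P k) = false.
Proof.
move=> h k.
have [j _ hj] : exists2 j, true & M P j j != 0.
  apply/exists_inP; apply: contraNT h => /exists_inPn hj.
  by rewrite /D big1 // => j _; apply/eqP; rewrite -[_ == _]negbK hj.
by rewrite (M_nz hj) eqxx.
Qed.
Arguments D_nz {P}.

Lemma O_nz th P j l : O th P j l != 0 -> forall k : 'I_n, flip (P k) = ((k == j) != (k == l)).
Proof.
move=> h k.
have [hjl|hjl] := eqVneq (M P j l) 0; last exact: M_nz.
have [hlj|hlj] := eqVneq (M P l j) 0.
  by move: h; rewrite /O hjl hlj !mulr0 addr0 eqxx.
by rewrite (M_nz hlj); case: (k == j); case: (k == l).
Qed.
Arguments O_nz {th P j l}.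

Lemma DO0 th P (j l : 'I_n) : (j < l)%N -> D P * O th P j l = 0.
Proof.
move=> hjl.
have [->|hD] := eqVneq (D P) 0; first by rewrite mul0r.
have [->|hO] := eqVneq (O th P j l) 0; first by rewrite mulr0.
exfalso; have := D_nz hD j; rewrite (O_nz hO j) eqxx /=.
have -> : (j == l) = false by apply/eqP => e; rewrite e ltnn in hjl.
by [].
Qed.

Lemma pair_eq (j l j' l' : 'I_n) : (j < l)%N -> (j' < l')%N ->
  (forall k : 'I_n, ((k == j) != (k == l)) = ((k == j') != (k == l'))) -> j = j' /\ l = l'.
Proof.
move=> hjl hjl' h.
have nE (a b : 'I_n) : (a < b)%N -> (a == b) = false /\ (b == a) = false.
  by move=> hab; split; apply/eqP => e; rewrite e ltnn in hab.
have [e1 e1'] := nE _ _ hjl; have [e2 e2'] := nE _ _ hjl'.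
have [ejj|njj] := eqVneq j j'.
  subst j'; split; first by []. apply/eqP; have := h l; rewrite e1' eqxx /=.
  by case: (l == l').
have := h j; rewrite eqxx e1 (negPf njj) /=.
case: (eqVneq j l') => [ejl' _|njl]; last by move=> /= H; discriminate H.
have := h j'; rewrite eqxx e2 /= (eq_sym j' j) (negPf njj) /=.
case: (eqVneq j' l) => [ejl _|njl]; last by move=> /= H; discriminate H.
exfalso; subst; first [have := ltn_trans hjl hjl' | have := ltn_trans hjl' hjl]; by rewrite ltnn.
Qed.

Lemma OO0 th P (j l j' l' : 'I_n) : (j < l)%N -> (j' < l')%N -> (j, l) != (j', l') ->
  O th P j l * O th P j' l' = 0.
Proof.
move=> hjl hjl' hne.
have [->|h1] := eqVneq (O th P j l) 0; first by rewrite mul0r.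
have [->|h2] := eqVneq (O th P j' l') 0; first by rewrite mulr0.
exfalso; have [e1 e2] : j = j' /\ l = l'.
  by apply: pair_eq => // k; rewrite -(O_nz h1) -(O_nz h2).
by move: hne; rewrite e1 e2 eqxx.
Qed.

Lemma sq_disj (I : finType) (Q : pred I) (x : I -> C) :
  (forall i k, Q i -> Q k -> i != k -> x i * x k = 0) ->
  (\sum_(i | Q i) x i) ^+ 2 = \sum_(i | Q i) x i ^+ 2.
Proof.
move=> h; rewrite expr2 big_distrl /=; apply: eq_bigr => i Qi.
rewrite big_distrr /= (bigD1 i) //= big1 ?addr0 ?expr2 // => k /andP [Qk nki].
by apply: h => //; rewrite eq_sym.
Qed.

Lemma sqrD0 (a b : C) : a * b = 0 -> (a + b) ^+ 2 = a ^+ 2 + b ^+ 2.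
Proof. by move=> h; rewrite sqrrD h mul0rn addr0. Qed.

Lemma Zc4 th P : Zc th P ^+ 4 =
  D P ^+ 4 + \sum_(p : 'I_n * 'I_n | (p.1 < p.2)%N) O th P p.1 p.2 ^+ 4.
Proof.
rewrite Zc_split pair_big_dep /=.
set S := \sum_(p | _) _.
have hDS : D P * S = 0.
  by rewrite /S big_distrr big1 // => p /= hp; rewrite DO0.
have hS2 : S ^+ 2 = \sum_(p : 'I_n * 'I_n | (p.1 < p.2)%N) O th P p.1 p.2 ^+ 2.
  apply: sq_disj => [[j l] [j' l']] /= h1 h2 hne; exact: OO0.
have -> : (D P + S) ^+ 4 = ((D P + S) ^+ 2) ^+ 2 by rewrite -exprM.
rewrite sqrD0 // hS2 sqrD0; last first.
  rewrite big_distrr big1 // => p /= hp.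
  by rewrite -exprMn DO0 // expr0n.
rewrite -exprM; congr (_ + _).
rewrite sq_disj; last first.
  move=> [j l] [j' l'] /= h1 h2 hne; by rewrite -exprMn OO0 // expr0n.
by apply: eq_bigr => p _; rewrite -exprM.
Qed.

End S2.
Arguments D {R n}.
Arguments O {R n}.



Section S3.
Variable R : realType.
Variable n : nat.
Local Notation C := R[i].
Local Notation cj := (@Num.conj _).
Local Notation M := (@M R n).

Lemma sumP_prod (F : 'I_n -> 'I_4 -> C) :
  \sum_(P : pauli n) \prod_k F k (P k) = \prod_k \sum_(p : 'I_4) F k p.
Proof. by rewrite bigA_distr_bigA. Qed.

Definition g (a b : nat) (x y : bool) : C :=
  \sum_(p : 'I_4) sigma R p x y ^+ a * sigma R p y x ^+ b.

Ltac gcomp := rewrite /g !big_ord_recl big_ord0 /sigma /=;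
  try rewrite -[1 : C]/(Complex 1 0); try rewrite -[0 : C]/(Complex 0 0); try rewrite -[2 : C]/(Complex (1+1) (0+0));
  apply/eqP; rewrite eq_complex /=; apply/andP; split; apply/eqP; ring.

Lemma g40a : g 4 0 true false = 2. Proof. gcomp. Qed.
Lemma g40b : g 4 0 false true = 2. Proof. gcomp. Qed.
Lemma g40c : g 4 0 false false = 2. Proof. gcomp. Qed.
Lemma g31a : g 3 1 true false = 0. Proof. gcomp. Qed.
Lemma g31c : g 3 1 false false = 2. Proof. gcomp. Qed.
Lemma g22a : g 2 2 true false = 2. Proof. gcomp. Qed.
Lemma g22b : g 2 2 false true = 2. Proof. gcomp. Qed.
Lemma g22c : g 2 2 false false = 2. Proof. gcomp. Qed.
Lemma g13a : g 1 3 true false = 0. Proof. gcomp. Qed.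
Lemma g13c : g 1 3 false false = 2. Proof. gcomp. Qed.
Lemma g04a : g 0 4 true false = 2. Proof. gcomp. Qed.
Lemma g04b : g 0 4 false true = 2. Proof. gcomp. Qed.
Lemma g04c : g 0 4 false false = 2. Proof. gcomp. Qed.

Lemma prod_two (j l : 'I_n) (h : bool -> bool -> C) : j != l -> h false false = 2 ->
  \prod_k h (k == j) (k == l) = 2 ^+ n * (h true false / 2) * (h false true / 2).
Proof.
move=> njl h00.
have h2 : (2 : C) != 0 by rewrite pnatr_eq0.
rewrite (eq_bigr (fun k => 2 * (h (k == j) (k == l) / 2))); last first.
  by move=> k _; rewrite mulrC divfK.
rewrite big_split /= prodr_const card_ord -mulrA; congr (_ * _).
rewrite (bigD1 j) //= eqxx (negPf njl) (bigD1 l) /=; last by rewrite eq_sym.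
rewrite eqxx eq_sym (negPf njl) big1 ?mulr1 // => k /andP [nkl nkj].
by rewrite (negPf nkl) (negPf nkj) h00 divff.
Qed.

Lemma sumAB (j l : 'I_n) a b : j != l -> g a b false false = 2 ->
  \sum_(P : pauli n) M P j l ^+ a * M P l j ^+ b
    = 2 ^+ n * (g a b true false / 2) * (g a b false true / 2).
Proof.
move=> njl h00.
rewrite -(@prod_two j l (fun x y => g a b x y) njl h00).
rewrite -sumP_prod; apply: eq_bigr => P _.
rewrite /M /Pmat -!prodrXl -big_split /=; apply: eq_bigr => k _.
by rewrite /ev1 !ffunE.
Qed.

Lemma sumA4 (j l : 'I_n) : j != l ->
  \sum_(P : pauli n) M P j l ^+ 4 = 2 ^+ n * (g 4 0 true false / 2) * (g 4 0 false true / 2).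
Proof.
move=> njl; rewrite -(@sumAB j l 4 0) ?g40c //; apply: eq_bigr => P _; by rewrite expr0 mulr1.
Qed.

Lemma sumB4 (j l : 'I_n) : j != l ->
  \sum_(P : pauli n) M P l j ^+ 4 = 2 ^+ n * (g 0 4 true false / 2) * (g 0 4 false true / 2).
Proof.
move=> njl; rewrite -(@sumAB j l 0 4) ?g04c //; apply: eq_bigr => P _; by rewrite expr0 mul1r.
Qed.

Lemma sumO4 (th : 'I_n -> R) (j l : 'I_n) : (j < l)%N ->
  \sum_(P : pauli n) O th P j l ^+ 4 =
  2 ^+ n * ((cj (expi (th j)) * expi (th l)) ^+ 4 +
            6 * (cj (expi (th j)) * expi (th l)) ^+ 2 * (cj (expi (th l)) * expi (th j)) ^+ 2 +
            (cj (expi (th l)) * expi (th j)) ^+ 4).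
Proof.
move=> hjl; have njl : j != l by apply/eqP => e; rewrite e ltnn in hjl.
set x := cj (expi (th j)) * expi (th l); set y := cj (expi (th l)) * expi (th j).
have e P : O th P j l ^+ 4 =
   x ^+ 4 * M P j l ^+ 4 + 4 * x ^+ 3 * y * (M P j l ^+ 3 * M P l j ^+ 1)
   + 6 * x ^+ 2 * y ^+ 2 * (M P j l ^+ 2 * M P l j ^+ 2)
   + 4 * x * y ^+ 3 * (M P j l ^+ 1 * M P l j ^+ 3) + y ^+ 4 * M P l j ^+ 4.
  by rewrite /O -/x -/y; ring.
under eq_bigr do rewrite e.
rewrite !big_split /= -!mulr_sumr (@sumA4 j l njl) (@sumB4 j l njl) (@sumAB j l 3 1 njl g31c).
rewrite (@sumAB j l 2 2 njl g22c) (@sumAB j l 1 3 njl g13c).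
rewrite g40a g40b g31a g22a g22b g13a g04a g04b.
have h2 : (2 : C) != 0 by rewrite pnatr_eq0.
rewrite /= !divff // !mul0r !mulr0; ring.
Qed.

End S3.



Section S4.
Variable R : realType.
Variable n : nat.
Local Notation C := R[i].
Local Notation cj := (@Num.conj _).
Local Notation M := (@M R n).

Lemma qval (x1 x2 x3 x4 : bool) :
  \sum_(p : 'I_4) sigma R p x1 x1 * sigma R p x2 x2 * sigma R p x3 x3 * sigma R p x4 x4
  = 2 * (~~ (x1 (+) x2 (+) x3 (+) x4))%:R.
Proof.
case: x1; case: x2; case: x3; case: x4;
  rewrite !big_ord_recl big_ord0 /sigma /= ?mulr1 ?mulr0;
  try rewrite -[1 : C]/(Complex 1 0); try rewrite -[0 : C]/(Complex 0 0);
  try rewrite -[2 : C]/(Complex (1+1) (0+0));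
  apply/eqP; rewrite eq_complex /=; apply/andP; split; apply/eqP; ring.
Qed.

Definition ev (a b c d : 'I_n) : bool :=
  [forall k : 'I_n, ~~ ((k == a) (+) (k == b) (+) (k == c) (+) (k == d))].

Lemma prod_nat (F : 'I_n -> bool) : \prod_k (F k)%:R = ([forall k, F k]%:R : C).
Proof.
case: (boolP [forall k, F k]) => [/forallP h|/forallPn [k hk]].
  by apply: big1 => k _; rewrite h.
by rewrite (bigD1 k) //= (negPf hk) mul0r.
Qed.

Lemma sumP_D4 a b c d :
  \sum_(P : pauli n) M P a a * M P b b * M P c c * M P d d = 2 ^+ n * (ev a b c d)%:R.
Proof.
pose F := fun (k : 'I_n) (p : 'I_4) => sigma R p (k == a) (k == a) *
   sigma R p (k == b) (k == b) * sigma R p (k == c) (k == c) * sigma R p (k == d) (k == d).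
rewrite (eq_bigr (fun P : pauli n => \prod_k F k (P k))); last first.
  move=> P _; rewrite /M /Pmat -!big_split /=; apply: eq_bigr => k _.
  by rewrite /F /ev1 !ffunE.
rewrite sumP_prod (eq_bigr (fun k : 'I_n => 2 * (~~ ((k == a) (+) (k == b) (+) (k == c) (+) (k == d)))%:R)); last first.
  by move=> k _; rewrite /F qval.
by rewrite big_split /= prodr_const card_ord prod_nat.
Qed.

Lemma pow4 (f : 'I_n -> C) :
  (\sum_j f j) ^+ 4 = \sum_a \sum_b \sum_c \sum_d f a * f b * f c * f d.
Proof.
have e2 : (\sum_j f j) ^+ 2 = \sum_a \sum_b f a * f b.
  by rewrite expr2 big_distrl; apply: eq_bigr => a _; rewrite big_distrr.
rewrite (_ : 4 = 2 * 2)%N // exprM e2 expr2 big_distrl; apply: eq_bigr => a _.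
rewrite big_distrl; apply: eq_bigr => b _; rewrite big_distrr; apply: eq_bigr => c _.
by rewrite big_distrr; apply: eq_bigr => d _; rewrite /= !mulrA.
Qed.

Lemma D4sum : \sum_(P : pauli n) D (R:=R) P ^+ 4 =
  \sum_a \sum_b \sum_c \sum_d 2 ^+ n * (ev a b c d)%:R.
Proof.
under eq_bigr do rewrite /D pow4.
rewrite exchange_big; apply: eq_bigr => a _; rewrite exchange_big; apply: eq_bigr => b _.
rewrite exchange_big; apply: eq_bigr => c _; rewrite exchange_big; apply: eq_bigr => d _.
exact: sumP_D4.
Qed.

Lemma xor2 (c d : 'I_n) : [forall k : 'I_n, ~~ ((k == c) (+) (k == d))] = (c == d).
Proof.
apply/forallP/eqP => [h|->]; last by move=> k; rewrite addbb.
by move: (h c); rewrite eqxx; case: eqP.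
Qed.

Local Notation ind x y := ((x == y)%:R : C).

Lemma ev_patv a b c d : (ev a b c d)%:R =
  ind a b * ind c d + ind a c * ind b d + ind a d * ind b c - 2 * ind a b * ind a c * ind a d.
Proof.
have [eab|nab] := eqVneq a b.
  subst b; have -> : ev a a c d = (c == d).
    by rewrite /ev -xor2; apply: eq_forallb => k; case: (k == a).
  by rewrite /=; ring.
have [eac|nac] := eqVneq a c.
  subst c; have -> : ev a b a d = (b == d).
    by rewrite /ev -xor2; apply: eq_forallb => k; case: (k == a); case: (k == b).
  by rewrite (eq_sym b a) (negPf nab) /=; ring.
have [ead|nad] := eqVneq a d.
  subst d; have -> : ev a b c a = (b == c).
    by rewrite /ev -xor2; apply: eq_forallb => k; case: (k == a); case: (k == b); case: (k == c).
  by rewrite /=; ring.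
have -> : ev a b c d = false.
  apply/forallP => /(_ a); by rewrite eqxx (negPf nab) (negPf nac) (negPf nad).
by rewrite /=; ring.
Qed.

Lemma sum_ind1 (x : 'I_n) : \sum_d ind x d = 1.
Proof. by rewrite (bigD1 x) //= eqxx big1 ?addr0 // => d /negPf; rewrite eq_sym => ->. Qed.

Lemma sum3 (x y z : 'I_n) (u v w t : C) :
  \sum_d (ind x d * u + ind y d * v + ind z d * w + t) = u + v + w + n%:R * t.
Proof.
rewrite !big_split /= -!big_distrl /= !sum_ind1 !mul1r sumr_const card_ord.
by rewrite mulr_natl.
Qed.

Lemma ev_count : \sum_a \sum_b \sum_c \sum_d ((ev a b c d)%:R : C) = n%:R * (3 * n%:R - 2).
Proof.
have hd a b c : \sum_d ((ev a b c d)%:R : C) =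
    ind a c * (1 - 2 * ind a b) + ind b c * 1 + ind a c * 0 + ind a b.
  rewrite (eq_bigr (fun d => ind c d * ind a b + ind b d * ind a c +
       ind a d * (ind b c - 2 * ind a b * ind a c) + 0)); last first.
    by move=> d _; rewrite ev_patv; ring.
  by rewrite sum3; ring.
have hc a b : \sum_c \sum_d ((ev a b c d)%:R : C) =
    ind a b * (n%:R - 2) + ind a b * 0 + ind a b * 0 + 2.
  under eq_bigr do rewrite hd.
  by rewrite sum3; ring.
have hb a : \sum_b \sum_c \sum_d ((ev a b c d)%:R : C) = 3 * n%:R - 2.
  under eq_bigr do rewrite hc.
  by rewrite sum3; ring.
under eq_bigr do rewrite hb.
by rewrite sumr_const card_ord [RHS]mulr_natl.
Qed.

Lemma sumD4 : \sum_(P : pauli n) D (R:=R) P ^+ 4 = 2 ^+ n * (n%:R * (3 * n%:R - 2)).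
Proof.
rewrite D4sum -ev_count mulr_sumr; apply: eq_bigr => a _.
rewrite mulr_sumr; apply: eq_bigr => b _.
rewrite mulr_sumr; apply: eq_bigr => c _.
by rewrite mulr_sumr.
Qed.

End S4.



Section S5.
Variable R : realType.
Local Notation C := R[i].
Local Notation cj := (@Num.conj _).

Lemma expiD (a b : R) : expi (a + b) = expi a * expi b.
Proof.
rewrite /expi cosD sinD; apply/eqP; rewrite eq_complex /=.
by apply/andP; split; apply/eqP; ring.
Qed.

Lemma expi0 : expi (0 : R) = 1.
Proof. by rewrite /expi cos0 sin0. Qed.

Lemma expiMn (k : nat) (t : R) : expi (k%:R * t) = expi t ^+ k.
Proof.
elim: k => [|k IH]; first by rewrite mul0r expr0 expi0.
by rewrite -addn1 natrD mulrDl mul1r expiD IH exprD expr1.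
Qed.

Lemma normc2 (z : C) : ((Normc.normc z) ^+ 2)%:C = cj z * z.
Proof.
case: z => a b; rewrite /= sqr_sqrtr ?addr_ge0 ?sqr_ge0 //.
change ((a ^+ 2 + b ^+ 2)%:C = conjc (a +i* b) * (a +i* b)).
apply/eqP; rewrite eq_complex /=; apply/andP; split; apply/eqP; ring.
Qed.

Variable n : nat.
Local Notation M := (@M R n).

Lemma sumZc4 (th : 'I_n -> R) : \sum_(P : pauli n) Zc th P ^+ 4 =
  2 ^+ n * (6 * n%:R * (n%:R - 1) + ((Normc.normc (\sum_j expi (4 * th j))) ^+ 2)%:C).
Proof.
under eq_bigr do rewrite Zc4.
rewrite big_split /= sumD4 exchange_big /=.
have hp (F : 'I_n -> 'I_n -> C) : \sum_(p : 'I_n * 'I_n | (p.1 < p.2)%N) F p.1 p.2 =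
    \sum_(j < n) \sum_(l < n | (j < l)%N) F j l by rewrite pair_big_dep.
pose x j l := cj (expi (th j)) * expi (th l).
pose G j l := 3 + x j l ^+ 4.
rewrite (eq_bigr (fun p : 'I_n * 'I_n => 2 ^+ n * (G p.1 p.2 + G p.2 p.1))); last first.
  move=> [j l] /= hjl; rewrite sumO4 //; congr (_ * _).
  have hxy : x j l * x l j = 1.
    rewrite /x; transitivity ((cj (expi (th j)) * expi (th j)) * (cj (expi (th l)) * expi (th l))); first ring.
    by rewrite !expi_unit mulr1.
  rewrite /G -/(x j l) -/(x l j).
  have -> : 6 * x j l ^+ 2 * x l j ^+ 2 = 6 by rewrite -mulrA -exprMn hxy expr1n mulr1.
  ring.
rewrite (hp (fun j l => 2 ^+ n * (G j l + G l j))).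
rewrite (eq_bigr (fun j : 'I_n => 2 ^+ n * \sum_(l < n | (j < l)%N) (G j l + G l j))); last by move=> j _; rewrite mulr_sumr.
rewrite -mulr_sumr.
have hs := @sum_split R n (fun j l => G j l).
have -> : \sum_(j < n) \sum_(l < n | (j < l)%N) (G j l + G l j)
    = \sum_j \sum_l G j l - \sum_j G j j by rewrite hs addrC addKr.
have hGd : \sum_j G j j = 4 * n%:R.
  rewrite (eq_bigr (fun _ => 4)); last first.
    by move=> j _; rewrite /G /x expi_unit expr1n; ring.
  by rewrite sumr_const card_ord mulr_natr.
have hGs : \sum_j \sum_l G j l = 3 * n%:R ^+ 2 +
    cj (\sum_j expi (4 * th j)) * \sum_j expi (4 * th j).
  rewrite (eq_bigr (fun j => 3 * n%:R + cj (expi (4 * th j)) * \sum_l expi (4 * th l))).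
    rewrite big_split /= sumr_const card_ord -mulr_suml rmorph_sum /=.
    by rewrite -mulr_natl; ring.
  move=> j _; rewrite /G big_split /= sumr_const card_ord mulr_sumr; congr (_ + _).
    by rewrite mulr_natr.
  apply: eq_bigr => l _; rewrite /x exprMn -rmorphXn /= -!(expiMn 4).
  by [].
rewrite hGd hGs -normc2; ring.
Qed.

End S5.



Section S6.
Variable R : realType.
Local Notation C := R[i].
Local Notation cj := (@Num.conj _).

Lemma norm44_gen (n : nat) (th : 'I_n -> R) : norm44 (Wstate th) =
  2 ^+ n / n%:R ^+ 4 * (6 * n%:R * (n%:R - 1) + Normc.normc (\sum_(j < n) expi (4 * th j)) ^+ 2).
Proof.
rewrite /norm44; under eq_bigr do rewrite Xi_W exprMn.
rewrite -mulr_sumr.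
have hr : \sum_(P : pauli n) complex.Re (Zc th P) ^+ 4 =
    2 ^+ n * (6 * n%:R * (n%:R - 1) + Normc.normc (\sum_(j < n) expi (4 * th j)) ^+ 2).
  apply: complexI; rewrite rmorph_sum /=.
  rewrite (eq_bigr (fun P => Zc th P ^+ 4)); last first.
    by move=> P _; rewrite rmorphXn /= -(@real_of_cj R _ (@Zc_cj R n th P)).
  rewrite sumZc4.
  rewrite !(rmorphM, rmorphD, rmorphB, rmorphXn, rmorph_nat, rmorph1) ?rmorphN ?rmorph1; ring.
rewrite hr exprVn; ring.
Qed.

Lemma normc_expi (x : R) : Normc.normc (expi x) ^+ 2 = 1.
Proof. by apply: complexI; rewrite normc2 expi_unit rmorph1. Qed.

Lemma Spos (n : nat) (th : 'I_n -> R) : (1 <= n)%N ->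
  0 < 6 * n%:R * (n%:R - 1) + Normc.normc (\sum_(j < n) expi (4 * th j)) ^+ 2.
Proof.
case: n th => [//|[|m]] th _.
  by rewrite big_ord1 normc_expi subrr mulr0 add0r.
apply: ltr_wpDr; first exact: sqr_ge0.
by rewrite mulr_gt0 ?mulr_gt0 ?ltr0n // subr_gt0 ltr1n.
Qed.

Lemma M2_gen (n : nat) (th : 'I_n -> R) : (1 <= n)%N ->
  M2 (Wstate th) = log2 (n%:R ^+ 4 / (6 * n%:R * (n%:R - 1) +
      Normc.normc (\sum_(j < n) expi (4 * th j)) ^+ 2)).
Proof.
move=> hn; have hS := @Spos n th hn.
set X := 6 * n%:R * (n%:R - 1) + _.
have hn0 : (n%:R : R) != 0 by rewrite pnatr_eq0 -lt0n.
have h2 : (2 : R) ^+ n != 0 by rewrite expf_neq0 // pnatr_eq0.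
rewrite /M2 norm44_gen -/X.
have -> : 2 ^+ n / n%:R ^+ 4 * X / 2 ^+ n = (n%:R ^+ 4 / X)^-1.
  by field; rewrite (gt_eqF hS) hn0 h2.
by rewrite /log2 lnV ?mulNr ?opprK // posrE divr_gt0 // exprn_gt0 // ltr0n.
Qed.

Lemma S0 (n : nat) :
  Normc.normc (\sum_(j < n) expi (4 * (fun _ : 'I_n => 0 : R) j)) ^+ 2 = n%:R ^+ 2.
Proof.
apply: complexI; rewrite normc2.
rewrite (eq_bigr (fun _ => 1)); last by move=> j _; rewrite mulr0 expi0.
by rewrite sumr_const card_ord rmorph_nat rmorphXn rmorph_nat expr2.
Qed.

Lemma N_expi2 (b : R) : cj (expi (2 * b) - 1) * (expi (2 * b) - 1) = (4 * sin b ^+ 2)%:C.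
Proof.
have -> : 2 * b = b + b by ring.
rewrite expiD.
have hu := cos2Dsin2 b.
change (conjc (expi b * expi b - 1) * (expi b * expi b - 1) = (4 * sin b ^+ 2)%:C).
rewrite /expi; apply/eqP; rewrite eq_complex /=; apply/andP; split; apply/eqP; last by ring.
apply: subr0_eq.
transitivity ((cos b ^+ 2 + sin b ^+ 2 - 1) ^+ 2); first by ring.
by rewrite hu subrr expr0n.
Qed.

Lemma Stht (n : nat) (t : R) :
  Normc.normc (\sum_(j < n) expi (4 * ((j.+1)%:R * t))) ^+ 2 = sinratio n t.
Proof.
set z := expi (4 * t).
have hz (j : 'I_n) : expi (4 * ((j.+1)%:R * t)) = z * z ^+ j.
  by rewrite mulrCA expiMn exprS.
apply: complexI; rewrite normc2.
rewrite (eq_bigr (fun j : 'I_n => z * z ^+ j)); last by move=> j _; rewrite hz.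
rewrite -mulr_sumr; set G := \sum_(j < n) z ^+ j.
have -> : cj (z * G) * (z * G) = cj G * G.
  rewrite rmorphM; transitivity ((cj z * z) * (cj G * G)); first by ring.
  by rewrite /z expi_unit mul1r.
rewrite /sinratio; case: ifP => [/eqP hs|/negbT hs].
  have hz1 : z = 1.
    rewrite /z; have -> : 4 * t = 2 * t + 2 * t by ring.
    rewrite expiD /expi; have hc := cos2Dsin2 (2 * t).
    rewrite hs expr0n addr0 /= in hc.
    apply/eqP; rewrite eq_complex /= hs !mulr0 !mul0r subr0 addr0 eqxx andbT.
    by rewrite -expr2 hc.
  rewrite /G hz1 (eq_bigr (fun _ => 1)); last by move=> j _; rewrite expr1n.
  by rewrite sumr_const card_ord rmorph_nat rmorphXn rmorph_nat expr2.
have hG : (z - 1) * G = z ^+ n - 1 by rewrite subrX1.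
have e1 : z = expi (2 * (2 * t)) by rewrite /z; congr expi; ring.
have e2 : z ^+ n = expi (2 * (2 * n%:R * t)).
  by rewrite /z -expiMn; congr expi; ring.
have hN : cj (z - 1) * (z - 1) * (cj G * G) = cj (z ^+ n - 1) * (z ^+ n - 1).
  rewrite -hG rmorphM; ring.
rewrite e2 N_expi2 {1 2}e1 N_expi2 in hN.
have hs2 : sin (2 * t) ^+ 2 != 0 by rewrite expf_neq0.
have h4 : ((4 * sin (2 * t) ^+ 2)%:C : C) != 0.
  by rewrite (inj_eq (@complexI R)) mulf_neq0 // pnatr_eq0.
have eR : 4 * sin (2 * t) ^+ 2 * (sin (2 * n%:R * t) ^+ 2 / sin (2 * t) ^+ 2) = 4 * sin (2 * n%:R * t) ^+ 2 by field.
by apply: (mulfI h4); rewrite hN -eR rmorphM.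
Qed.

End S6.



Theorem mainTheorem13 (R : realType) (n : nat) (hn : (1 <= n)%N)
  (th : 'I_n -> R) (t : R) :
  let nR : R := n%:R in
  let d : R := 2 ^+ n in
  let S : R := Normc.normc (\sum_(j < n) expi (4 * th j)) ^+ 2 in
  let tht : 'I_n -> R := fun j => (j.+1)%:R * t in
  (norm44 (Wstate th) = d / nR ^+ 4 * (6 * nR * (nR - 1) + S) /\
      M2 (Wstate th) = log2 (nR ^+ 4 / (6 * nR * (nR - 1) + S)) /\
      norm44 (Wstate (fun _ : 'I_n => 0 : R)) = d * (7 * nR - 6) / nR ^+ 3 /\
      M2 (Wstate (fun _ : 'I_n => 0 : R)) = log2 (nR ^+ 3 / (7 * nR - 6)) /\
      norm44 (Wstate tht) = d * (6 * nR ^+ 2 - 6 * nR + sinratio n t) / nR ^+ 4 /\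
    M2 (Wstate tht) = log2 (nR ^+ 4 / (6 * nR ^+ 2 - 6 * nR + sinratio n t))).
Proof.
move=> nR d S tht.
have hn0 : (n%:R : R) != 0 by rewrite pnatr_eq0 -lt0n.
have h1 : (1 <= (n%:R : R)) by rewrite ler1n.
have h7 : (7 * (n%:R : R) - 6) != 0 by apply: lt0r_neq0; lra.
have h7' : (6 * (n%:R : R) * (n%:R - 1) + n%:R ^+ 2) != 0.
  apply: lt0r_neq0; have : 0 <= (n%:R : R) * (n%:R - 1) by apply: mulr_ge0; lra.
  rewrite expr2; nra.
split; first by rewrite norm44_gen.
split; first exact: M2_gen.
split; first by rewrite norm44_gen S0 /d /nR; field.
split; first by rewrite M2_gen // S0 /nR; congr log2; field; rewrite h7 h7'.
split; first by rewrite norm44_gen /tht /= Stht /d /nR; field.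
by rewrite M2_gen // /tht /= Stht /nR; congr log2; congr (_ / _); ring.
Qed.
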